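(* Let $p$ be a probability distribution on $[d]$, fix $S\subseteq[d]$ with $|S| = s$, and suppose $m$ independent samples from $p$ are drawn; let $N_i$ be the number of samples equal to $i$. Let $q$ be the estimator with $q_i = (N_i+1)/(m+s)$ for $i\in S$ (the add-one estimator on $S$) and empirical (count-based) estimates on the remaining elements, so that $q$ is a probability distribution. Then $$\mathbb{E}\bigl[\chi^2(p[S]\|q[S])\bigr] \le \frac{s}{m+s} + \Bigl(\frac{(s-1)^2}{(m+1)(m+s)} - \frac{1}{m+s}\Bigr)\|p[S]\|_1 \le s/m + (s/m)^2 \le 2s/m,$$ the last inequality assuming $m\ge s$; in the case $S=[d]$ the first upper bound equals $\frac{d-1}{m+1}\le d/m$. Moreover, assuming $m\ge s$, and writing $m_\delta = m/(c\ln(1/\delta))$ for a sufficiently large universal constant $c$, if $p_i\ge 1/m_{\delta/s}$ for all $i\in S$, then except with probability at most $\delta$, $q_i$ is within a factor $4$ of $p_i$ (i.e. $p_i/4\le q_i\le 4p_i$) simultaneously for all $i\in S$.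
   Context: For a vector $p\in\mathbb{R}^d$ and $S\subseteq[d]$, $p[S]$ is the subvector indexed by $S$. For nonnegative vectors (not necessarily summing to $1$), $\chi^2(a\|b) = \sum_i (a_i - b_i)^2/b_i$. *)

(* Defs.v *)
From HB Require Import structures.
From mathcomp Require Import all_boot all_order all_algebra.
From mathcomp Require Import reals exp.
Set Implicit Arguments. Unset Strict Implicit. Unset Printing Implicit Defensive.
Import Order.TTheory GRing.Theory Num.Theory.
Local Open Scope ring_scope.

Section Defs.
Context {R : realType}.

Definition is_dist (d : nat) (p : 'I_d -> R) : Prop :=
  (forall i, 0 <= p i) /\ \sum_(i < d) p i = 1.

(* An outcome of m i.i.d. samples from p: a function 'I_m -> 'I_d,
   with probability \prod_j p (x j). *)
Definition sample_prob (d m : nat) (p : 'I_d -> R) (x : {ffun 'I_m -> 'I_d}) : R :=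
  \prod_(j < m) p (x j).

Definition Exp (d m : nat) (p : 'I_d -> R) (f : {ffun 'I_m -> 'I_d} -> R) : R :=
  \sum_(x : {ffun 'I_m -> 'I_d}) sample_prob p x * f x.

Definition Pr (d m : nat) (p : 'I_d -> R) (E : pred {ffun 'I_m -> 'I_d}) : R :=
  \sum_(x : {ffun 'I_m -> 'I_d} | E x) sample_prob p x.

Definition cnt (d m : nat) (x : {ffun 'I_m -> 'I_d}) (i : 'I_d) : nat :=
  #|[set j : 'I_m | x j == i]|.

(* Add-one estimator on S, empirical (count-based, normalized by m+s so that
   q is a probability distribution) outside S. *)
Definition addone_est (d m : nat) (S : {set 'I_d}) (x : {ffun 'I_m -> 'I_d})
  (i : 'I_d) : R :=
  if i \in S then ((cnt x i).+1)%:R / (m + #|S|)%:R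
  else (cnt x i)%:R / (m + #|S|)%:R.

Definition chi2_on (d : nat) (S : {set 'I_d}) (a b : 'I_d -> R) : R :=
  \sum_(i in S) (a i - b i) ^+ 2 / b i.

Definition l1_on (d : nat) (S : {set 'I_d}) (a : 'I_d -> R) : R :=
  \sum_(i in S) `|a i|.

Definition m_delta (c : R) (m : nat) (delta : R) : R :=
  m%:R / (c * ln (1 / delta)).

End Defs.

(* Main.v *)
Require Import Defs.
From HB Require Import structures.
From mathcomp Require Import all_boot all_order all_algebra.
From mathcomp Require Import reals exp.
From mathcomp Require Import sequences.
From mathcomp Require Import ring lra.
Import Order.TTheory GRing.Theory Num.Theory.
Local Open Scope ring_scope.
Set Implicit Arguments. Unset Strict Implicit. Unset Printing Implicit Defensive.

Section Found.
Variable R : realType.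
Variable d : nat.
Variable p : 'I_d -> R.

Definition fcons m (a : 'I_d) (y : {ffun 'I_m -> 'I_d}) : {ffun 'I_m.+1 -> 'I_d} :=
  [ffun j => if unlift ord0 j is Some k then y k else a].
Definition ftl m (x : {ffun 'I_m.+1 -> 'I_d}) : {ffun 'I_m -> 'I_d} :=
  [ffun k => x (lift ord0 k)].

Lemma sum_ffun_rec m (F : {ffun 'I_m.+1 -> 'I_d} -> R) :
  \sum_x F x = \sum_(a : 'I_d) \sum_(y : {ffun 'I_m -> 'I_d}) F (fcons a y).
Proof.
rewrite pair_bigA /=.
rewrite (reindex (fun u : 'I_d * {ffun 'I_m -> 'I_d} => fcons u.1 u.2)) //=.
exists (fun x : {ffun 'I_m.+1 -> 'I_d} => (x ord0, ftl x)).
- move=> [a y] _ /=; rewrite /fcons /ftl ffunE unlift_none; congr (_, _).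
  by apply/ffunP => k; rewrite !ffunE liftK.
- move=> x _; apply/ffunP => j; rewrite /fcons /ftl ffunE.
  case: unliftP => [k ->|->] //; by rewrite ffunE.
Qed.

Lemma sp_cons m a (y : {ffun 'I_m -> 'I_d}) :
  sample_prob p (fcons a y) = p a * sample_prob p y.
Proof.
rewrite /sample_prob big_ord_recl /fcons ffunE unlift_none; congr (_ * _).
by apply: eq_bigr => k _; rewrite ffunE liftK.
Qed.

Lemma cnt_sum m (x : {ffun 'I_m -> 'I_d}) i : cnt x i = (\sum_(j < m) (x j == i))%N.
Proof.
rewrite /cnt -sum1dep_card big_mkcond /=; apply: eq_bigr => j _.
by case: (x j == i).
Qed.

Lemma cnt_cons m a (y : {ffun 'I_m -> 'I_d}) i :
  cnt (fcons a y) i = ((a == i) + cnt y i)%N.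
Proof.
rewrite !cnt_sum big_ord_recl /fcons ffunE unlift_none; congr (_ + _)%N.
by apply: eq_bigr => k _; rewrite ffunE liftK.
Qed.

Lemma sp_ge0 m (x : {ffun 'I_m -> 'I_d}) : (forall i, 0 <= p i) -> 0 <= sample_prob p x.
Proof. by move=> h; apply: prodr_ge0 => j _. Qed.


Hypothesis pd : is_dist p.
Let p_ge0 : forall i, 0 <= p i. Proof. by case: pd. Qed.

Lemma Exp_ext m (f g : {ffun 'I_m -> 'I_d} -> R) : (forall x, f x = g x) -> Exp p f = Exp p g.
Proof. by move=> h; apply: eq_bigr => x _; rewrite h. Qed.

Lemma Exp_add m (f g : {ffun 'I_m -> 'I_d} -> R) :
  Exp p (fun x => f x + g x) = Exp p f + Exp p g.
Proof. by rewrite /Exp -big_split /=; apply: eq_bigr => x _; rewrite mulrDr. Qed.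

Lemma Exp_scale m c (f : {ffun 'I_m -> 'I_d} -> R) :
  Exp p (fun x => c * f x) = c * Exp p f.
Proof. by rewrite /Exp big_distrr /=; apply: eq_bigr => x _; rewrite mulrCA. Qed.

Lemma Exp_le m (f g : {ffun 'I_m -> 'I_d} -> R) : (forall x, f x <= g x) -> Exp p f <= Exp p g.
Proof. move=> h; apply: ler_sum => x _; apply: ler_wpM2l; [exact: sp_ge0|exact: h]. Qed.

Lemma Exp_sum m (I : finType) (P : pred I) (F : I -> {ffun 'I_m -> 'I_d} -> R) :
  Exp p (fun x => \sum_(j | P j) F j x) = \sum_(j | P j) Exp p (F j).
Proof.
rewrite /Exp exchange_big /=; apply: eq_bigr => x _; by rewrite big_distrr.
Qed.

Variable i : 'I_d.
Definition Phi m (f : nat -> R) : R := Exp p (fun x : {ffun 'I_m -> 'I_d} => f (cnt x i)).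

Lemma Phi0 f : Phi 0 f = f 0%N.
Proof.
rewrite /Phi /Exp (eq_bigr (fun _ => f 0%N)); last first.
  by move=> x _; rewrite /sample_prob big_ord0 mul1r cnt_sum big_ord0.
by rewrite sumr_const card_ffun card_ord card_ord /=; rewrite mulr1n.
Qed.

Lemma Phi_rec m f : Phi m.+1 f = p i * Phi m (fun k => f k.+1) + (1 - p i) * Phi m f.
Proof.
rewrite /Phi /Exp sum_ffun_rec (bigD1 i) //=.
have -> : (1 - p i) = \sum_(a | a != i) p a.
  by case: pd => _ <-; rewrite (bigD1 i) //= addrC addrK.
congr (_ + _).
  rewrite big_distrr /=; apply: eq_bigr => y _.
  by rewrite sp_cons cnt_cons eqxx mulrA.
rewrite big_distrl /=; apply: eq_bigr => a ai.
rewrite big_distrr /=; apply: eq_bigr => y _.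
by rewrite sp_cons cnt_cons (negbTE ai) add0n mulrA.
Qed.

Lemma Phi_ext m f g : (forall k, f k = g k) -> Phi m f = Phi m g.
Proof. by move=> h; apply: Exp_ext => x; rewrite h. Qed.

Lemma Phi_add m f g : Phi m (fun k => f k + g k) = Phi m f + Phi m g.
Proof. exact: Exp_add. Qed.

Lemma Phi_scale m c f : Phi m (fun k => c * f k) = c * Phi m f.
Proof. exact: Exp_scale. Qed.

Lemma Phi_le m f g : (forall k, f k <= g k) -> Phi m f <= Phi m g.
Proof. by move=> h; apply: Exp_le => x. Qed.

Lemma Phi_pow m t : Phi m (fun k => t ^+ k) = (1 - p i + p i * t) ^+ m.
Proof.
elim: m => [|m IH]; first by rewrite Phi0 !expr0.
rewrite Phi_rec (Phi_ext _ (g := fun k => t * t ^+ k)); last by move=> k; rewrite exprS.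
by rewrite Phi_scale IH exprS; ring.
Qed.

Lemma Phi_one m : Phi m (fun _ => 1) = 1.
Proof.
rewrite (Phi_ext _ (g := fun k => 1 ^+ k)); last by move=> k; rewrite expr1n.
by rewrite Phi_pow mulr1 subrK expr1n.
Qed.

Lemma Phi_N m : Phi m (fun k => k%:R) = m%:R * p i.
Proof.
elim: m => [|m IH]; first by rewrite Phi0 !mul0r.
rewrite Phi_rec (Phi_ext _ (g := fun k => k%:R + 1)); last by move=> k; rewrite -natr1.
rewrite Phi_add Phi_one IH -natr1; ring.
Qed.

Lemma Phi_key m : forall f, Phi m.+1 (fun k => k%:R * f k) = (m.+1)%:R * p i * Phi m (fun k => f k.+1).
Proof.
elim: m => [|m IH] f.
  by rewrite Phi_rec !Phi0 mul0r mulr0 addr0 mul1r mul1r.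
rewrite Phi_rec.
rewrite (Phi_ext _ (g := fun k => k%:R * f k.+1 + f k.+1)); last first.
  by move=> k; rewrite -natr1 mulrDl mul1r.
rewrite Phi_add !IH (Phi_rec m (fun k => f k.+1)).
rewrite -!natr1; ring.
Qed.

Lemma Phi_inv m : p i * Phi m (fun k => (k.+1%:R)^-1) <= (m.+1%:R)^-1.
Proof.
have h : (m.+1%:R) * p i * Phi m (fun k => (k.+1%:R)^-1) <= 1.
  rewrite -(Phi_key m (fun k => (k%:R)^-1)) -[X in _ <= X](Phi_one m.+1).
  apply: Phi_le => k; case: k => [|k]; first by rewrite mul0r.
  by rewrite divff // pnatr_eq0.
rewrite -mulrA in h.
by rewrite -(ler_pM2l (_ : 0 < m.+1%:R)) ?ltr0Sn // mulfV // pnatr_eq0.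
Qed.

End Found.


Lemma part1a (R : realType) (d : nat) (p : 'I_d -> R) (S : {set 'I_d}) (m : nat) :
  is_dist p -> (0 < m)%N ->
  Exp p (fun x : {ffun 'I_m -> 'I_d} => chi2_on S p (addone_est S x))
  <= ((m%:R + #|S|%:R) / (m%:R + 1) - 2 + m%:R / (m%:R + #|S|%:R)) * l1_on S p + #|S|%:R / (m%:R + #|S|%:R).
Proof.
move=> pd m0; set s : R := #|S|%:R; set Q := m%:R + s.
have pge0 : forall i, 0 <= p i by case: pd.
have Qgt0 : 0 < Q by rewrite /Q /s -natrD ltr0n addn_gt0 m0.
have QE : (m + #|S|)%:R = Q :> R by rewrite natrD.
have sE : s / Q = \sum_(i in S) Q^-1 by rewrite sumr_const /s mulr_natl.
rewrite /chi2_on Exp_sum /l1_on big_distrr /= sE -big_split /=.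
apply: ler_sum => i iS.
rewrite ger0_norm // /addone_est iS QE.
set c := Q / (m%:R + 1) - 2 + m%:R / Q.
have -> : Exp p (fun x : {ffun 'I_m -> 'I_d} => (p i - (cnt x i).+1%:R / Q) ^+ 2 / ((cnt x i).+1%:R / Q))
   = Phi p i m (fun k => (p i ^+ 2 * Q) * (k.+1%:R)^-1 + ((- 2 * p i) * 1 + (Q^-1 * k%:R + Q^-1 * 1))).
  apply: Exp_ext => x; rewrite -natr1.
  have h1 : (cnt x i)%:R + 1 != 0 :> R by rewrite natr1 pnatr_eq0.
  field. by rewrite h1 gt_eqF.
rewrite (Phi_add p i m (fun k => p i ^+ 2 * Q / k.+1%:R)).
rewrite (Phi_scale p i m (p i ^+ 2 * Q) (fun k => k.+1%:R^-1)).
rewrite (Phi_add p i m (fun k => -2 * p i * 1)).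
rewrite (Phi_scale p i m (-2 * p i) (fun k => 1)) (Phi_one pd).
rewrite (Phi_add p i m (fun k => Q^-1 * k%:R)).
rewrite (Phi_scale p i m (Q^-1) (fun k => k%:R)) (Phi_N pd).
rewrite (Phi_scale p i m (Q^-1) (fun k => 1)) (Phi_one pd).
have h := Phi_inv pd i m.
have h2 : p i ^+ 2 * Q * Phi p i m (fun k => k.+1%:R^-1) <= p i * Q / (m%:R + 1).
  have -> : p i ^+ 2 * Q * Phi p i m (fun k => k.+1%:R^-1) = (p i * Q) * (p i * Phi p i m (fun k => k.+1%:R^-1)) by ring.
  apply: ler_wpM2l; first by apply: mulr_ge0 => //; exact: ltW.
  by move: h; rewrite -natr1.
rewrite /c; move: h2; set u := p i ^+ 2 * Q * _ => h2.
have : u + (-2 * p i * 1 + (Q^-1 * (m%:R * p i) + Q^-1 * 1)) <= p i * Q / (m%:R + 1) + (-2 * p i * 1 + (Q^-1 * (m%:R * p i) + Q^-1 * 1)).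
  by rewrite lerD2r.
move/le_trans; apply.
rewrite le_eqVlt; apply/orP; left; apply/eqP. field.
by rewrite gt_eqF //= natr1 pnatr_eq0.
Qed.

Lemma le_frac (R : realFieldType) (a b c e : R) : 0 < b -> 0 < e -> a * e <= c * b -> a / b <= c / e.
Proof. by move=> b0 e0 h; rewrite ler_pdivrMr // mulrAC ler_pdivlMr. Qed.

Lemma l1_ge0 (R : realType) d (p : 'I_d -> R) S : 0 <= l1_on S p.
Proof. by apply: sumr_ge0 => i _. Qed.

Lemma l1_le1 (R : realType) d (p : 'I_d -> R) S : is_dist p -> l1_on S p <= 1.
Proof.
case=> pge0 <-; rewrite /l1_on big_mkcond /=; apply: ler_sum => i _.
by case: (i \in S); rewrite ?ger0_norm.
Qed.



Lemma part1 (R : realType) (d : nat) (p : 'I_d -> R) (S : {set 'I_d}) (m : nat) :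
     is_dist p -> (0 < m)%N ->
     let s : R := #|S|%:R in
     let bound : R :=
       s / (m%:R + s)
       + ((s - 1) ^+ 2 / ((m%:R + 1) * (m%:R + s)) - 1 / (m%:R + s)) * l1_on S p in
     [/\ Exp p (fun x : {ffun 'I_m -> 'I_d} => chi2_on S p (addone_est S x)) <= bound,
         bound <= s / m%:R + (s / m%:R) ^+ 2,
         ((#|S| <= m)%N -> s / m%:R + (s / m%:R) ^+ 2 <= 2 * s / m%:R)
       & (S = setT -> bound = (d%:R - 1) / (m%:R + 1)
                      /\ (d%:R - 1) / (m%:R + 1) <= d%:R / m%:R :> R)].
Proof.
move=> pd m0 s bound.
have s0 : 0 <= s by rewrite /s ler0n.
have m0' : 0 < m%:R :> R by rewrite ltr0n.
have Q0 : 0 < m%:R + s by lra.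
have m1 : 0 < m%:R + 1 :> R by lra.
set P := l1_on S p.
have P0 : 0 <= P := l1_ge0 p S.
have P1 : P <= 1 := l1_le1 S pd.
have bE : bound = (1 - P) * (s / (m%:R + s)) + P * ((s - 1) / (m%:R + 1)).
  rewrite /bound /P; field; rewrite !gt_eqF //.
have bE2 : bound = ((m%:R + s) / (m%:R + 1) - 2 + m%:R / (m%:R + s)) * P + s / (m%:R + s).
  rewrite /bound /P; field; rewrite !gt_eqF //.
have a_le : s / (m%:R + s) <= s / m%:R by apply: le_frac => //; nra.
have b_le : (s - 1) / (m%:R + 1) <= s / m%:R by apply: le_frac => //; nra.
have c0 : 0 <= s / m%:R by apply: divr_ge0 => //; exact: ltW.
split.
- rewrite bE2; exact: part1a.
- rewrite bE; nra.
- move=> sm; have r1 : s / m%:R <= 1.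
    by rewrite ler_pdivrMr // mul1r /s ler_nat.
  rewrite -mulrA; nra.
- move=> ST.
  have sd : s = d%:R by rewrite /s ST cardsT card_ord.
  have PE : P = 1.
    case: pd => pge0 <-; rewrite /P /l1_on ST.
    rewrite (eq_bigl (fun _ => true)); last by move=> i; rewrite in_setT.
    by apply: eq_bigr => i _; rewrite ger0_norm.
  split.
    rewrite bE PE -sd; field; rewrite !gt_eqF //.
  by rewrite -sd.
Qed.


Lemma p_le1 (R : realType) d (p : 'I_d -> R) i : is_dist p -> p i <= 1.
Proof.
case=> h <-; rewrite (bigD1 i) //= lerDl; exact: sumr_ge0.
Qed.

Lemma mgf (R : realType) d (p : 'I_d -> R) (pd : is_dist p) i m (t : R) : 0 <= t ->
  Phi p i m (fun k => t ^+ k) <= expR (m%:R * p i * (t - 1)).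
Proof.
move=> t0; rewrite (Phi_pow pd).
have p0 : 0 <= p i by case: pd.
have p1 := p_le1 i pd.
have -> : m%:R * p i * (t - 1) = (p i * (t - 1)) * m%:R by ring.
rewrite expRM_natr; apply: lerXn2r.
- rewrite nnegrE; nra.
- by rewrite nnegrE expR_ge0.
- have := expR_ge1Dx (p i * (t - 1)); lra.
Qed.

Lemma expR1_le4 (R : realType) : expR (1 : R) <= 4.
Proof.
have h : 1 - 1/2 <= expR (- (1/2) : R) by have := expR_ge1Dx (- (1/2) : R).
rewrite expRN in h.
have e0 : 0 < expR (1/2 : R) by apply: expR_gt0.
have h2 : expR (1/2 : R) <= 2.
  have : 1/2 * expR (1/2 : R) <= (expR (1/2 : R))^-1 * expR (1/2) by apply: ler_wpM2r => //; [exact: ltW | lra].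
  rewrite mulVf ?gt_eqF //; lra.
have -> : (1 : R) = 2%:R * (1/2) by field.
rewrite expRM_natl.
apply: (le_trans (y := 2 ^+ 2)); last by rewrite expr2; lra.
apply: lerXn2r => //; rewrite nnegrE //; exact: ltW.
Qed.

Lemma expR1_gt2 (R : realType) : 2 < expR (1 : R).
Proof. have := @expR_gt1Dx R 1 (oner_neq0 _); lra. Qed.

Definition kap (R : realType) : R := 1/2 - expR (-1).

Lemma kap_gt0 (R : realType) : 0 < kap R.
Proof.
rewrite /kap expRN; have h := expR1_gt2 R.
have e0 : 0 < expR (1:R) by lra.
have : (expR (1:R))^-1 < 1/2.
  rewrite -[X in _ < X]invf_div divr1 ltf_pV2 ?posrE //; lra.
lra.
Qed.

Lemma kap_le (R : realType) : kap R <= 1/2.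
Proof. rewrite /kap; have := expR_ge0 (-1 : R); lra. Qed.

Lemma tail_i (R : realType) d (p : 'I_d -> R) (pd : is_dist p) i m :
  Exp p (fun x : {ffun 'I_m -> 'I_d} =>
     expR (m%:R * p i / 2 - (cnt x i)%:R) + expR ((cnt x i)%:R + 1 - 4 * (m%:R * p i)))
  <= 5 * expR (- (kap R * (m%:R * p i))).
Proof.
set mu := m%:R * p i.
have p0 : 0 <= p i by case: pd.
have mu0 : 0 <= mu by rewrite /mu; apply: mulr_ge0 => //; rewrite ler0n.
have -> : Exp p (fun x : {ffun 'I_m -> 'I_d} =>
     expR (mu / 2 - (cnt x i)%:R) + expR ((cnt x i)%:R + 1 - 4 * mu))
   = Phi p i m (fun k => expR (mu / 2) * expR (-1) ^+ k + expR (1 - 4 * mu) * expR 1 ^+ k).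
  apply: Exp_ext => x; rewrite -!expRM_natr -!expRD; congr (expR _ + expR _); ring.
rewrite (Phi_add p i m (fun k => expR (mu / 2) * expR (-1) ^+ k)).
rewrite (Phi_scale p i m (expR (mu / 2)) (fun k => expR (-1) ^+ k)).
rewrite (Phi_scale p i m (expR (1 - 4 * mu)) (fun k => expR 1 ^+ k)).
have h1 := mgf pd i m (expR_ge0 (-1)).
have h2 := mgf pd i m (expR_ge0 1).
have e4 := expR1_le4 R.
have k0 := kap_gt0 R. have k1 := kap_le R.
have T1 : expR (mu / 2) * Phi p i m (fun k => expR (-1) ^+ k) <= expR (- (kap R * mu)).
  apply: le_trans (_ : expR (mu / 2) * expR (m%:R * p i * (expR (-1) - 1)) <= _).
    by apply: ler_wpM2l => //; exact: expR_ge0.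
  rewrite -expRD ler_expR /kap -/mu; lra.
have T2 : expR (1 - 4 * mu) * Phi p i m (fun k => expR 1 ^+ k) <= 4 * expR (- (kap R * mu)).
  apply: le_trans (_ : expR (1 - 4 * mu) * expR (m%:R * p i * (expR 1 - 1)) <= _).
    by apply: ler_wpM2l => //; exact: expR_ge0.
  rewrite -expRD -/mu.
  apply: le_trans (_ : expR (1 + - (kap R * mu)) <= _).
    rewrite ler_expR; nra.
  rewrite expRD; apply: ler_wpM2r => //; exact: expR_ge0.
lra.
Qed.


Lemma g_ge1 (R : realType) d (p : 'I_d -> R) (S : {set 'I_d}) m (x : {ffun 'I_m -> 'I_d}) i :
  is_dist p -> i \in S -> (#|S| <= m)%N -> (0 < m)%N ->
  ~~ ((p i / 4 <= addone_est S x i) && (addone_est S x i <= 4 * p i)) ->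
  1 <= expR (m%:R * p i / 2 - (cnt x i)%:R) + expR ((cnt x i)%:R + 1 - 4 * (m%:R * p i)).
Proof.
move=> pd iS sm m0 bad.
have p0 : 0 <= p i by case: pd.
set N : R := (cnt x i)%:R.
set mu := m%:R * p i.
have E1 := expR_ge0 (mu / 2 - N). have E2 := expR_ge0 (N + 1 - 4 * mu).
case: (lerP 0 (mu / 2 - N)) => h1.
  have := expR_ge1Dx (mu / 2 - N); lra.
case: (lerP 0 (N + 1 - 4 * mu)) => h2.
  have := expR_ge1Dx (N + 1 - 4 * mu); lra.
have eN : (cnt x i).+1%:R = N + 1 :> R by rewrite /N natr1.
exfalso; move/negP: bad; apply; rewrite /addone_est iS natrD eN.
set s : R := #|S|%:R.
have s0 : 0 <= s by rewrite ler0n.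
have sm' : s <= m%:R by rewrite ler_nat.
have m0' : 0 < m%:R :> R by rewrite ltr0n.
have Q0 : 0 < m%:R + s by lra.
have a1 : 0 <= p i * (m%:R - s) by apply: mulr_ge0 => //; lra.
have a2 : 0 <= p i * s by apply: mulr_ge0.
apply/andP; split.
  rewrite (ler_pdivlMr _ _ Q0); rewrite /mu in h1; nra.
rewrite (ler_pdivrMr _ _ Q0); rewrite /mu in h2; nra.
Qed.

Lemma part2 (R : realType) :
  exists c0 : R, 0 < c0 /\
     forall c : R, c0 <= c ->
     forall (d : nat) (p : 'I_d -> R) (S : {set 'I_d}) (m : nat) (delta : R),
       is_dist p -> (#|S| <= m)%N -> 0 < delta -> delta <= 1 / 2 ->
       (forall i, i \in S -> 1 / m_delta c m (delta / #|S|%:R) <= p i) ->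
       Pr p (fun x : {ffun 'I_m -> 'I_d} =>
               [exists i in S, ~~ ((p i / 4 <= addone_est S x i)
                                   && (addone_est S x i <= 4 * p i))])
       <= delta.
Proof.
have k0 := kap_gt0 R.
exists (4 / kap R); split; first by apply: divr_gt0.
move=> c c0c d p S m delta pd sm d0 dh hp.
have p0 : forall i, 0 <= p i by case: pd.
case: (boolP (#|S| == 0%N)) => [/eqP S0|Sn0].
  rewrite /Pr big_pred0; first exact: ltW.
  move=> x; apply/negbTE; apply/existsP => -[i /andP [iS _]].
  by move: iS; rewrite (card0_eq S0).
have s1 : (1 <= #|S|)%N by rewrite lt0n.
have m0 : (0 < m)%N by apply: leq_trans sm.
set s : R := #|S|%:R.
have s1' : 1 <= s by rewrite /s ler1n.
have m0' : 0 < m%:R :> R by rewrite ltr0n.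
set r := delta / s.
have r0 : 0 < r by apply: divr_gt0 => //; lra.
have rh : r <= 1 / 2.
  rewrite /r ler_pdivrMr; last by lra.
  nra.
set L := ln (1 / r).
have rpos : r \in Num.pos by rewrite posrE.
have LE : expR (- L) = r by rewrite /L div1r lnV // opprK lnK.
have L0 : 0 <= L.
  rewrite /L; apply: ln_ge0; rewrite div1r -[X in X <= _]invr1 lef_pV2 ?posrE //; lra.
have c0 : 0 < c by apply: lt_le_trans c0c; apply: divr_gt0.
have kc : 4 <= kap R * c.
  have := ler_wpM2l (ltW k0) c0c; rewrite mulrCA divff ?gt_eqF // mulr1; exact: id.
have mu_ge : forall i, i \in S -> c * L <= m%:R * p i.
  move=> i iS; have := hp i iS; rewrite /m_delta -/r -/L div1r invf_div.
  by rewrite ler_pdivrMr // [p i * _]mulrC.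
have r3 : r ^+ 3 <= (1/2) ^+ 3 by apply: lerXn2r => //; rewrite nnegrE; [exact: ltW | lra].
have per_i : forall i, i \in S ->
  Exp p (fun x : {ffun 'I_m -> 'I_d} =>
     expR (m%:R * p i / 2 - (cnt x i)%:R) + expR ((cnt x i)%:R + 1 - 4 * (m%:R * p i))) <= r.
  move=> i iS; apply: le_trans (tail_i pd i m) _.
  apply: le_trans (_ : 5 * expR (4%:R * (- L)) <= _).
    apply: ler_wpM2l => //; rewrite ler_expR.
    have := mu_ge i iS; nra.
  rewrite expRM_natl LE.
  have : (1/2 : R) ^+ 3 = 1/8 by field.
  move=> e8; rewrite e8 in r3.
  have -> : r ^+ 4 = r ^+ 3 * r by rewrite exprS mulrC.
  nra.
apply: le_trans (_ : Exp p (fun x : {ffun 'I_m -> 'I_d} => \sum_(i in S)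
     (expR (m%:R * p i / 2 - (cnt x i)%:R) + expR ((cnt x i)%:R + 1 - 4 * (m%:R * p i)))) <= _).
  rewrite /Pr /Exp [X in X <= _]big_mkcond /=; apply: ler_sum => x _.
  have sp0 := sp_ge0 x p0.
  case: ifP => [/existsP [i /andP [iS bad]] | _].
    rewrite -[X in X <= _]mulr1; apply: ler_wpM2l => //.
    rewrite (bigD1 i) //=; apply: le_trans (g_ge1 pd iS sm m0 bad) _.
    rewrite lerDl; apply: sumr_ge0 => j _; apply: addr_ge0; exact: expR_ge0.
  apply: mulr_ge0 => //; apply: sumr_ge0 => j _; apply: addr_ge0; exact: expR_ge0.
rewrite Exp_sum.
apply: le_trans (_ : \sum_(i in S) r <= _); first by apply: ler_sum => i iS; exact: per_i.
rewrite sumr_const /r -/s -mulr_natr mulrAC -mulrA divff ?mulr1 //; rewrite gt_eqF //; lra.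
Qed.


Unset Implicit Arguments.

Theorem proposition2p16 (R : realType) :
  (forall (d : nat) (p : 'I_d -> R) (S : {set 'I_d}) (m : nat),
     is_dist p -> (0 < m)%N ->
     let s : R := #|S|%:R in
     let bound : R :=
       s / (m%:R + s)
       + ((s - 1) ^+ 2 / ((m%:R + 1) * (m%:R + s)) - 1 / (m%:R + s)) * l1_on S p in
     [/\ Exp p (fun x : {ffun 'I_m -> 'I_d} => chi2_on S p (addone_est S x)) <= bound,
         bound <= s / m%:R + (s / m%:R) ^+ 2,
         ((#|S| <= m)%N -> s / m%:R + (s / m%:R) ^+ 2 <= 2 * s / m%:R)
       & (S = setT -> bound = (d%:R - 1) / (m%:R + 1)
                      /\ (d%:R - 1) / (m%:R + 1) <= d%:R / m%:R :> R)])
  /\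
  (exists c0 : R, 0 < c0 /\
     forall c : R, c0 <= c ->
     forall (d : nat) (p : 'I_d -> R) (S : {set 'I_d}) (m : nat) (delta : R),
       is_dist p -> (#|S| <= m)%N -> 0 < delta -> delta <= 1 / 2 ->
       (forall i, i \in S -> 1 / m_delta c m (delta / #|S|%:R) <= p i) ->
       Pr p (fun x : {ffun 'I_m -> 'I_d} =>
               [exists i in S, ~~ ((p i / 4 <= addone_est S x i)
                                   && (addone_est S x i <= 4 * p i))])
       <= delta).
Proof.
split.
- move=> d p S m pd m0; exact: part1.
- exact: part2.
Qed.
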